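(* Let $M\geq 1$ be an integer and consider the bilateral cooperation model described in the context, with arbitrary real utility vectors. Then every dominant-strategy incentive-compatible (DSIC) mechanism $r$ has competitive ratio $C_r\leq 1/M$.
   Context: Bilateral cooperation model: there are two agents, a buyer and a seller, and options $0,1,\dots,M$. A buyer utility vector is $b=(b_1,\dots,b_M)\in\mathbb{R}^M$ and a seller utility vector is $s=(s_1,\dots,s_M)\in\mathbb{R}^M$ (entries may be positive, zero or negative; these are private information); by convention $b_0=s_0=0$. Define $\mathrm{Feasible}(b,s)=\{i\in\{0,\dots,M\}: b_i\geq 0 \text{ and } s_i\geq 0\}$ and $OPT(b,s)=\max_{i\in \mathrm{Feasible}(b,s)}(b_i+s_i)$. A mechanism is a function $r$ mapping each pair of reported vectors $(b',s')\in\mathbb{R}^M\times\mathbb{R}^M$ to a probability vector $(r_0(b',s'),\dots,r_M(b',s'))$ with nonnegative entries summing to $1$. The mechanism $r$ is DSIC if for all $b,b',s,s'\in\mathbb{R}^M$: $\sum_{i=1}^M r_i(b,s')\,b_i\geq \sum_{i=1}^M r_i(b',s')\,b_i$ and $\sum_{i=1}^M r_i(b',s)\,s_i\geq \sum_{i=1}^M r_i(b',s')\,s_i$ (here $b,s$ are the true vectors). For a DSIC mechanism, its gain at true vectors $(b,s)$ is $G_r(b,s)=\sum_{i=1}^M r_i(b,s)(b_i+s_i)$, and its competitive ratio is $C_r=\min_{b,s} G_r(b,s)/OPT(b,s)$. *)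

(* Defs.v *)
From mathcomp Require Import all_boot all_order all_algebra.
From mathcomp Require Import reals.
Set Implicit Arguments. Unset Strict Implicit. Unset Printing Implicit Defensive.
Import Order.TTheory GRing.Theory Num.Theory.
Local Open Scope ring_scope.

(* A utility vector in R^M: entries indexed by 'I_M, entry j standing for
   option j+1. Options 0..M are indexed by 'I_M.+1, option 0 = ord0. *)
Definition uvec (R : realType) (M : nat) := 'I_M -> R.

Definition util (R : realType) (M : nat) (b : uvec R M) (i : 'I_M.+1) : R :=
  match unlift ord0 i with Some j => b j | None => 0 end.

Definition mechanism (R : realType) (M : nat) :=
  uvec R M -> uvec R M -> 'I_M.+1 -> R.

Definition is_mechanism (R : realType) (M : nat) (r : mechanism R M) : Prop :=
  forall b' s' : uvec R M,
    (forall i, 0 <= r b' s' i) /\ \sum_(i < M.+1) r b' s' i = 1.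

Definition expval (R : realType) (M : nat) (r : mechanism R M)
  (b' s' v : uvec R M) : R :=
  \sum_(j < M) r b' s' (lift ord0 j) * v j.

Definition DSIC (R : realType) (M : nat) (r : mechanism R M) : Prop :=
  forall b b' s s' : uvec R M,
    expval r b' s' b <= expval r b s' b /\
    expval r b' s' s <= expval r b' s s.

Definition feasible (R : realType) (M : nat) (b s : uvec R M) (i : 'I_M.+1) : bool :=
  (0 <= util b i) && (0 <= util s i).

(* OPT(b,s) = max over feasible options of b_i + s_i.  Option 0 is always
   feasible with value 0 and every feasible value is >= 0, so a fold of max
   with initial value 0 is exactly this maximum. *)
Definition OPT (R : realType) (M : nat) (b s : uvec R M) : R :=
  \big[Num.max/0]_(i < M.+1 | feasible b s i) (util b i + util s i).

Definition gain (R : realType) (M : nat) (r : mechanism R M) (b s : uvec R M) : R :=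
  \sum_(j < M) r b s (lift ord0 j) * (b j + s j).

(* C_r <= c, where C_r = inf over (b,s) with OPT(b,s) > 0 of G_r/OPT:
   for every eps > 0 some instance has ratio < c + eps. *)
Definition competitive_ratio_le (R : realType) (M : nat) (r : mechanism R M) (c : R) : Prop :=
  forall eps : R, 0 < eps ->
    exists b s : uvec R M, 0 < OPT b s /\ gain r b s / OPT b s < c + eps.

(* Main.v *)
Require Import Defs.
From mathcomp Require Import all_boot all_order all_algebra.
From mathcomp Require Import reals ring lra.
From Stdlib Require Import Classical.
Import Order.TTheory GRing.Theory Num.Theory.
Set Implicit Arguments. Unset Strict Implicit.
Local Open Scope ring_scope.

Definition sel (R : realType) (M : nat) (m : nat) (a b c : R) (j : 'I_M) : R :=
  if (j < m)%N then a else if (j == m :> nat) then b else c.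
Definition Lo (R : realType) M (k : nat) (p : 'I_M -> R) : R :=
  \sum_(j < M) (if (j < k)%N then p j else 0).
Definition At (R : realType) M (k : nat) (p : 'I_M -> R) : R :=
  \sum_(j < M) (if (j == k :> nat) then p j else 0).
Definition Hi (R : realType) M (k : nat) (p : 'I_M -> R) : R :=
  \sum_(j < M) (if (k <= j)%N then p j else 0).

Lemma sum_sel (R : realType) M m (a b c : R) (p : 'I_M -> R) :
  \sum_(j < M) p j * sel m a b c j = a * Lo m p + b * At m p + c * Hi m.+1 p.
Proof.
rewrite /Lo /At /Hi !mulr_sumr -!big_split /=; apply: eq_bigr => j _.
rewrite /sel; case: (ltngtP j m) => H; rewrite ?mulr0 ?addr0 ?add0r mulrC //.
Qed.

Lemma Lo_S (R : realType) M k (p : 'I_M -> R) : Lo k.+1 p = Lo k p + At k p.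
Proof.
rewrite /Lo /At -big_split /=; apply: eq_bigr => j _.
rewrite ltnS; case: (ltngtP j k) => H; rewrite ?addr0 ?add0r //.
Qed.

Lemma Lo0 (R : realType) M (p : 'I_M -> R) : Lo 0 p = 0.
Proof. by rewrite /Lo big1. Qed.

Lemma Hi_S (R : realType) M k (p : 'I_M -> R) : (forall j, 0 <= p j) ->
  Hi k.+1 p <= Hi k p.
Proof.
move=> hp; rewrite /Hi; apply: ler_sum => j _.
case: (ltngtP k j) => H //=; rewrite ?H ?ltnW //.
Qed.

Lemma tot (R : realType) M k (p : 'I_M -> R) :
  Lo k p + At k p + Hi k.+1 p = \sum_(j < M) p j.
Proof.
have := sum_sel k 1 1 1 p; rewrite !mul1r => <-.
apply: eq_bigr => j _; rewrite /sel; case: ifP => _; [|case: ifP => _]; by rewrite mulr1.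
Qed.

Lemma nonneg_if (R : realType) M (P : 'I_M -> bool) (p : 'I_M -> R) :
  (forall j, 0 <= p j) -> 0 <= \sum_(j < M) (if P j then p j else 0).
Proof. move=> hp; apply: sumr_ge0 => j _; case: ifP => //. Qed.

Lemma sum_le (R : realType) M (p x y : 'I_M -> R) :
  (forall j, 0 <= p j) -> (forall j, x j <= y j) ->
  \sum_(j < M) p j * x j <= \sum_(j < M) p j * y j.
Proof. move=> hp hxy; apply: ler_sum => j _; exact: ler_wpM2l. Qed.

Lemma util_lift (R : realType) M (b : uvec R M) j : util b (lift ord0 j) = b j.
Proof. by rewrite /util liftK. Qed.

Lemma OPT_ge (R : realType) M (b s : uvec R M) i :
  feasible b s i -> util b i + util s i <= OPT b s.
Proof. move=> hf; rewrite /OPT (bigD1 i) //= le_max lexx //. Qed.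

Lemma probs (R : realType) M (r : mechanism R M) : is_mechanism r -> forall b s,
  (forall j, 0 <= r b s (lift ord0 j)) /\ \sum_(j < M) r b s (lift ord0 j) <= 1.
Proof.
move=> H b s; have [h0 h1] := H b s; split => //.
move: h1; rewrite big_ord_recl => h1; have := h0 ord0; lra.
Qed.

Lemma bnds (R : realType) M k (p : 'I_M -> R) : (forall j, 0 <= p j) ->
  \sum_(j < M) p j <= 1 ->
  [/\ 0 <= Lo k p, 0 <= At k p, 0 <= Hi k.+1 p & Lo k p + At k p + Hi k.+1 p <= 1].
Proof.
move=> hp hs; split; rewrite ?tot //; exact: nonneg_if.
Qed.

Lemma main_contra (R : realType) M (hM : (1 <= M)%N) (r : mechanism R M) (e : R) :
  is_mechanism r -> DSIC r -> 0 < e ->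
  (forall b s, 0 < OPT b s -> (M%:R)^-1 + e <= gain r b s / OPT b s) -> False.
Proof.
move=> Hm Hd he Hc.
have hMi : 0 <= (M%:R : R)^-1 by rewrite invr_ge0.
set c := (M%:R)^-1 + e.
have hc0 : 0 < c by rewrite /c; lra.
have Hc' : forall b s, 0 < OPT b s -> c * OPT b s <= gain r b s.
  by move=> b s hO; rewrite -ler_pdivlMr //; exact: Hc.
have he0 : e != 0 by rewrite gt_eqF.
have hinve : 0 < e^-1 by rewrite invr_gt0.
set sg : R := 4 * e^-1 + 1.
have hsg1 : 1 <= sg by rewrite /sg; lra.
have hsg0 : 0 < sg by lra.
have hsginv : sg^-1 <= e / 4.
  have hsgE : sg * (e / 4) = 1 + e / 4 by rewrite /sg; field.
  rewrite -[sg^-1]mul1r ler_pdivrMr // mulrC hsgE; lra.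
set Smax : R := sg ^+ M.
have hSj : forall j : nat, (j <= M)%N -> 1 <= sg ^+ j /\ sg ^+ j <= Smax.
  move=> j hj; split; first exact: exprn_ege1.
  exact: ler_weXn2l.
have hSm1 : 1 <= Smax by have [] := hSj M (leqnn M).
set D : R := 4 * (2 * Smax + 3) * e^-1 + 1.
have hD0 : 0 <= 4 * (2 * Smax + 3) * e^-1 by apply: mulr_ge0; lra.
have hD : 1 <= D by rewrite /D; lra.
have hDe : (2 * Smax + 3) <= D * (e / 4).
  have -> : D * (e / 4) = (2 * Smax + 3) + e / 4 by rewrite /D; field.
  lra.
set hmax : R := D ^+ M.
have hh : forall m : nat, (m <= M)%N -> 1 <= D ^+ m /\ D ^+ m <= hmax.
  move=> j hj; split; first exact: exprn_ege1.
  exact: ler_weXn2l.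
set K : R := hmax + Smax.
have hK : 2 <= K by have [] := hh M (leqnn M); rewrite /K; lra.
set V : R := 2 * Smax + 4 * Smax * K * e^-1.
have hV0 : 0 <= 4 * Smax * K * e^-1 by apply: mulr_ge0; [apply: mulr_ge0|]; lra.
have hVS : 2 * Smax <= V by rewrite /V; lra.
have hVK : (e / 4) * (V - Smax) = (e / 4) * Smax + Smax * K by rewrite /V; field.
pose S : uvec R M := fun j => sg ^+ j.
pose B (m : nat) : uvec R M := sel m (D ^+ m) 1 (-V).
pose T (m : nat) : uvec R M := sel m (-hmax) (sg ^+ m) (-hmax).
pose P m := fun j : 'I_M => r (B m) S (lift ord0 j).
pose Q m := fun j : 'I_M => r (B m) (T m) (lift ord0 j).
have hP : forall m, (forall j, 0 <= P m j) /\ \sum_(j < M) P m j <= 1.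
  move=> m; exact: probs.
have hQ : forall m, (forall j, 0 <= Q m j) /\ \sum_(j < M) Q m j <= 1.
  move=> m; exact: probs.
have hSj' : forall j : 'I_M, 0 <= S j <= Smax.
  move=> j; have [h1 h2] := hSj j (ltnW (ltn_ord j)); rewrite /S; apply/andP; split; lra.
have Bm : forall m (hm : (m < M)%N), B m (Ordinal hm) = 1.
  by move=> m hm; rewrite /B /sel /= ltnn eqxx.
have L2 : forall m, (m < M)%N ->
    Smax * Hi m.+1 (P m) <= e/4 /\ V * Hi m.+1 (P m) <= 2 * (D ^+ m + Smax).
  move=> m hm.
  have hO : 1 + sg ^+ m <= OPT (B m) S.
    have := @OPT_ge R M (B m) S (lift ord0 (Ordinal hm)); rewrite !util_lift Bm.
    apply; rewrite /feasible !util_lift Bm /S /=.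
    have [h1 _] := hSj m (ltnW hm); apply/andP; split; lra.
  have [h1 _] := hSj m (ltnW hm).
  have hg := Hc' (B m) S ltac:(lra).
  have hg2 : gain r (B m) S <= \sum_(j < M) P m j * sel m (D ^+ m + Smax) (1 + Smax) (Smax - V) j.
    apply: sum_le; first by case: (hP m).
    move=> j; have := hSj' j; case/andP => hs1 hs2.
    rewrite /B /sel; case: ifP => _; [|case: ifP => _]; lra.
  rewrite sum_sel in hg2.
  have [hp1 hp2] := hP m.
  have [l1 l2 l3 l4] := bnds m hp1 hp2.
  have [hd1 hd2] := hh m (ltnW hm).
  have e1 : (D ^+ m + Smax) * Lo m (P m) + (1 + Smax) * At m (P m) <= D ^+ m + Smax.
    nra.
  have hcO : 0 <= c * OPT (B m) S by apply: mulr_ge0; lra.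
  have e2 : (V - Smax) * Hi m.+1 (P m) <= K by rewrite /K; nra.
  have e3 : (V - Smax) * Hi m.+1 (P m) <= D ^+ m + Smax by nra.
  split; last by nra.
  have e4 : (e / 4) * ((V - Smax) * Hi m.+1 (P m)) <= (e / 4) * K.
    by rewrite ler_pM2l //; lra.
  rewrite mulrA hVK in e4.
  have e5 : Smax * K * Hi m.+1 (P m) <= (e / 4) * K.
    have : 0 <= (e / 4) * Smax * Hi m.+1 (P m) by apply: mulr_ge0; [apply: mulr_ge0|]; lra.
    move: e4; rewrite mulrDl; lra.
  have e6 : (Smax * Hi m.+1 (P m)) * K <= (e / 4) * K by move: e5; rewrite mulrAC.
  by rewrite ler_pM2r in e6; last lra.
have L3 : forall m, (m < M)%N -> c - e/4 - e/4 <= At m (P m).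
  move=> m hm.
  have [h1 h2] := hSj m (ltnW hm).
  have Tm : T m (Ordinal hm) = sg ^+ m by rewrite /T /sel /= ltnn eqxx.
  have hO : 1 + sg ^+ m <= OPT (B m) (T m).
    have := @OPT_ge R M (B m) (T m) (lift ord0 (Ordinal hm)); rewrite !util_lift Bm Tm.
    apply; rewrite /feasible !util_lift Bm Tm /=.
    apply/andP; split; lra.
  have hg := Hc' (B m) (T m) ltac:(lra).
  have hg2 : gain r (B m) (T m) <= \sum_(j < M) Q m j * sel m 0 (1 + sg ^+ m) 0 j.
    apply: sum_le; first by case: (hQ m).
    move=> j; have [hd1 hd2] := hh m (ltnW hm).
    rewrite /B /T /sel; case: ifP => _; [|case: ifP => _]; lra.
  rewrite sum_sel !mul0r add0r addr0 in hg2.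
  have hcO : c * (1 + sg ^+ m) <= c * OPT (B m) (T m) by rewrite ler_pM2l.
  have hQm : c <= At m (Q m).
    by rewrite -(ler_pM2r (_ : 0 < 1 + sg ^+ m)) ?[At _ _ * _]mulrC; lra.
  have hds := (Hd (B m) (B m) S (T m)).2.
  have hd1 : sg ^+ m * At m (Q m) <= expval r (B m) (T m) S.
    have := @sum_le R M (Q m) (sel m 0 (sg ^+ m) 0) S.
    rewrite sum_sel !mul0r add0r addr0; apply; first by case: (hQ m).
    move=> j; have := hSj' j; case/andP => hs1 hs2.
    rewrite /sel; case: ifP => _; first lra.
    case: ifP; last by move=> _; lra.
    by move/eqP => hj; rewrite /S hj lexx.
  have hd2 : expval r (B m) S S <=
      sg^-1 * sg ^+ m * Lo m (P m) + sg ^+ m * At m (P m) + Smax * Hi m.+1 (P m).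
    rewrite -sum_sel; apply: sum_le; first by case: (hP m).
    move=> j; have := hSj' j; case/andP => hs1 hs2.
    rewrite /sel; case: ifP => hjm.
      rewrite mulrC ler_pdivlMr // /S -exprSr.
      by apply: ler_weXn2l.
    case: ifP; last by move=> _; lra.
    by move/eqP => hj; rewrite /S hj lexx.
  have [hp1 hp2] := hP m.
  have [l1 l2 l3 l4] := bnds m hp1 hp2.
  have [s1 _] := L2 m hm.
  have hx : 0 <= Smax * Hi m.+1 (P m) by apply: mulr_ge0; lra.
  have hy : Smax * Hi m.+1 (P m) <= sg ^+ m * (Smax * Hi m.+1 (P m)) by
    rewrite ler_peMl.
  have hz : sg ^+ m * c <= sg ^+ m * (sg^-1 * Lo m (P m) + At m (P m) + Smax * Hi m.+1 (P m)).
    have hcm : sg ^+ m * c <= sg ^+ m * At m (Q m) by rewrite ler_pM2l //; lra.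
    have -> : sg ^+ m * (sg^-1 * Lo m (P m) + At m (P m) + Smax * Hi m.+1 (P m)) =
      sg^-1 * sg ^+ m * Lo m (P m) + sg ^+ m * At m (P m) + sg ^+ m * (Smax * Hi m.+1 (P m)).
      by ring.
    lra.
  rewrite ler_pM2l in hz; last lra.
  have hw : sg^-1 * Lo m (P m) <= sg^-1 by rewrite ler_piMr ?invr_ge0 //; lra.
  lra.
have L4 : forall k, (k.+1 < M)%N -> Lo k.+1 (P k) - e/4 <= Lo k.+1 (P k.+1).
  move=> k hk.
  have hb := (Hd (B k.+1) (B k) S S).1.
  rewrite /expval /B in hb.
  rewrite !sum_sel in hb.
  rewrite -/(B k) -/(B k.+1) in hb.
  have [p1 p2] := hP k; have [q1 q2] := hP k.+1.
  have [l1 l2 l3 l4] := bnds k.+1 p1 p2.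
  have [m1 m2 m3 m4] := bnds k.+1 q1 q2.
  have hi := Hi_S k.+1 p1.
  have [_ v2] := L2 k (ltnW hk).
  have [d1 d2] := hh k (ltnW (ltnW hk)).
  have hV0' : 0 <= V by lra.
  have hv : V * Hi k.+2 (P k) <= V * Hi k.+1 (P k) by rewrite ler_wpM2l.
  have hv2 : 0 <= V * Hi k.+2 (P k.+1) by apply: mulr_ge0.
  have hDk : D ^+ k.+1 = D * D ^+ k by rewrite exprS.
  set h := D ^+ k.+1 in hb hDk *.
  have hh0 : 0 < h by rewrite hDk; apply: mulr_gt0; lra.
  have hmain : h * Lo k.+1 (P k) - 2 * (D ^+ k + Smax) <= h * Lo k.+1 (P k.+1) + 1.
    move: hb; rewrite /P; lra.
  have hE : 2 * (D ^+ k + Smax) + 1 <= h * (e / 4).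
    rewrite hDk -mulrA [D * _]mulrC mulrA.
    have : D ^+ k * (2 * Smax + 3) <= D ^+ k * (D * (e / 4)) by rewrite ler_pM2l //; lra.
    nra.
  have : h * (Lo k.+1 (P k) - e / 4) <= h * Lo k.+1 (P k.+1).
    rewrite mulrBr; lra.
  by rewrite ler_pM2l.
have Ind : forall k, (k < M)%N -> k.+1%:R * (c - 3 * e / 4) <= Lo k.+1 (P k).
  elim => [|k IH] hk.
    have := L3 0%N hk; rewrite Lo_S Lo0 add0r mul1r; lra.
  have := IH (ltnW hk); have := L4 k hk; have := L3 k.+1 hk.
  rewrite [Lo k.+2 _]Lo_S -[k.+2]addn1 natrD mulrDl mul1r; lra.
have := Ind M.-1 ltac:(by rewrite prednK).
rewrite prednK //.
have hM0 : 0 < (M%:R : R) by rewrite ltr0n.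
have hMn : (M%:R : R) != 0 by rewrite gt_eqF.
have -> : M%:R * (c - 3 * e / 4) = 1 + M%:R * (e - 3 * e / 4) by rewrite /c; field.
have [p1 p2] := hP M.-1.
have [l1 l2 l3 l4] := bnds M p1 p2.
have : 0 < M%:R * (e - 3 * e / 4) by apply: mulr_gt0 => //; lra.
lra.
Qed.

Theorem theorem1 (R : realType) (M : nat) (hM : (1 <= M)%N) (r : mechanism R M) :
  is_mechanism r -> DSIC r -> competitive_ratio_le r (M%:R)^-1.
Proof.
move=> Hm Hd eps he; apply: NNPP => Hn.
apply: (main_contra hM Hm Hd he) => b s hO.
rewrite leNgt; apply/negP => Hlt; apply: Hn.
by exists b, s; split.
Qed.
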